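(* Let $f:X\to Y$ be a continuous surjection between compact Hausdorff spaces. Then the map $OH(f):OH(X)\to OH(Y)$ is open if and only if $f$ is open.
   Context: All spaces are compact Hausdorff and all maps continuous. For a compactum $X$, $C(X)$ is the Banach space of continuous real functions on $X$ with the sup-norm, and $c_X$ denotes the constant function with value $c\in\mathbb{R}$. Let $V(X)=\prod_{\varphi\in C(X)}[\min\varphi,\max\varphi]$ with the product topology (elements are functionals $\nu:C(X)\to\mathbb{R}$). A functional $\nu:C(X)\to\mathbb{R}$ is: normed if $\nu(1_X)=1$; weakly additive if $\nu(\varphi+c_X)=\nu(\varphi)+c$ for all $\varphi\in C(X)$, $c\in\mathbb{R}$; order-preserving if $\varphi\le\psi$ implies $\nu(\varphi)\le\nu(\psi)$; positively homogeneous if $\nu(t\varphi)=t\nu(\varphi)$ for all $t\ge 0$. $OH(X)\subset V(X)$ is the subspace of all functionals that are normed, weakly additive, order-preserving and positively homogeneous. For a map $f:X\to Y$, $OH(f):OH(X)\to OH(Y)$ is given by $OH(f)(\nu)(\varphi)=\nu(\varphi\circ f)$ for $\varphi\in C(Y)$. *)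

(* Defs.v *)
From Stdlib Require Import Reals Lra List.
Open Scope R_scope.
Set Implicit Arguments.

Record TopSpace := {
  carrier :> Type;
  opens : (carrier -> Prop) -> Prop;
  open_full : opens (fun _ => True);
  open_union : forall (I : Type) (F : I -> carrier -> Prop),
      (forall i, opens (F i)) -> opens (fun x => exists i, F i x);
  open_inter : forall A B : carrier -> Prop,
      opens A -> opens B -> opens (fun x => A x /\ B x)
}.

Definition compact_space (X : TopSpace) : Prop :=
  forall (I : Type) (F : I -> X -> Prop),
    (forall i, opens X (F i)) -> (forall x, exists i, F i x) ->
    exists l : list I, forall x, exists i, In i l /\ F i x.

Definition hausdorff_space (X : TopSpace) : Prop :=
  forall x y : X, x <> y ->
    exists U V : X -> Prop, opens X U /\ opens X V /\ U x /\ V y /\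
      (forall z, ~ (U z /\ V z)).

Definition continuous {X Y : TopSpace} (f : X -> Y) : Prop :=
  forall V, opens Y V -> opens X (fun x => V (f x)).

Definition image {A B : Type} (f : A -> B) (U : A -> Prop) : B -> Prop :=
  fun y => exists x, U x /\ f x = y.

Definition open_map {X Y : TopSpace} (f : X -> Y) : Prop :=
  forall U, opens X U -> opens Y (image f U).

Definition R_open (U : R -> Prop) : Prop :=
  forall x, U x -> exists e, 0 < e /\ forall y, Rabs (y - x) < e -> U y.

Definition continuousR {X : TopSpace} (phi : X -> R) : Prop :=
  forall U, R_open U -> opens X (fun x => U (phi x)).

Definition C (X : TopSpace) := { phi : X -> R | continuousR phi }.

Definition ev {X : TopSpace} (phi : C X) : X -> R := proj1_sig phi.

(* membership in V(X) = prod_phi [min phi, max phi]: nu(phi) lies in every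
   closed interval containing the range of phi (= [min phi, max phi] for
   compact_space nonempty X). *)
Definition in_V {X : TopSpace} (nu : C X -> R) : Prop :=
  forall phi : C X,
    (forall m, (forall x, m <= ev phi x) -> m <= nu phi) /\
    (forall M, (forall x, ev phi x <= M) -> nu phi <= M).

Definition normed {X : TopSpace} (nu : C X -> R) : Prop :=
  forall one : C X, (forall x, ev one x = 1) -> nu one = 1.

Definition weakly_additive {X : TopSpace} (nu : C X -> R) : Prop :=
  forall (phi psi : C X) (c : R), (forall x, ev psi x = ev phi x + c) ->
    nu psi = nu phi + c.

Definition order_preserving {X : TopSpace} (nu : C X -> R) : Prop :=
  forall phi psi : C X, (forall x, ev phi x <= ev psi x) -> nu phi <= nu psi.

Definition pos_homogeneous {X : TopSpace} (nu : C X -> R) : Prop :=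
  forall (phi psi : C X) (t : R), 0 <= t -> (forall x, ev psi x = t * ev phi x) ->
    nu psi = t * nu phi.

Definition isOH {X : TopSpace} (nu : C X -> R) : Prop :=
  in_V nu /\ normed nu /\ weakly_additive nu /\ order_preserving nu /\
  pos_homogeneous nu.

Definition OH (X : TopSpace) := { nu : C X -> R | isOH nu }.

(* Subspace topology on OH(X) induced by the product topology of V(X):
   U is open iff every point has a basic (finitely-many-coordinates)
   neighbourhood contained in U. *)
Definition OH_open {X : TopSpace} (U : OH X -> Prop) : Prop :=
  forall nu, U nu -> exists (l : list (C X)) (e : R), 0 < e /\
    forall mu : OH X,
      (forall phi, In phi l -> Rabs (proj1_sig mu phi - proj1_sig nu phi) < e) ->
      U mu.

Definition OH_open_map {X Y : TopSpace} (F : OH X -> OH Y) : Prop :=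
  forall U, OH_open U -> OH_open (image F U).

Lemma comp_cont {X Y : TopSpace} (f : X -> Y) (hf : continuous f) (psi : C Y) :
  continuousR (fun x => ev psi (f x)).
Proof.
  intros U hU. apply (hf (fun y => U (ev psi y))). exact (proj2_sig psi U hU).
Qed.

Definition compC {X Y : TopSpace} (f : X -> Y) (hf : continuous f) (psi : C Y) : C X :=
  exist _ (fun x => ev psi (f x)) (comp_cont hf psi).

Definition OHf_fun {X Y : TopSpace} (f : X -> Y) (hf : continuous f)
  (nu : C X -> R) : C Y -> R := fun psi => nu (compC hf psi).

Lemma OHf_isOH {X Y : TopSpace} (f : X -> Y) (hf : continuous f) (nu : C X -> R) :
  isOH nu -> isOH (OHf_fun hf nu).
Proof.
  intros [hV [hn [hw [ho hh]]]]; unfold OHf_fun; repeat split.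
  - intros m hm. apply (proj1 (hV _)). intros x. apply hm.
  - intros M hM. apply (proj2 (hV _)). intros x. apply hM.
  - intros one h1. apply hn. intros x. apply h1.
  - intros phi psi c h. apply hw. intros x. apply h.
  - intros phi psi h. apply ho. intros x. apply h.
  - intros phi psi t ht h. apply hh; [exact ht|]. intros x. apply h.
Qed.

Definition OHmap {X Y : TopSpace} (f : X -> Y) (hf : continuous f) :
  OH X -> OH Y :=
  fun nu => exist _ (OHf_fun hf (proj1_sig nu)) (OHf_isOH hf (proj2_sig nu)).

(* Main.v *)
From Stdlib Require Import Reals Lra Lia List Classical FunctionalExtensionality PropExtensionality ProofIrrelevance IndefiniteDescription.
Require Import Defs.
Open Scope R_scope.


Lemma opens_ext (X : TopSpace) (A B : X -> Prop) :
  (forall z, A z <-> B z) -> opens X A -> opens X B.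
Proof.
  intros h hA. replace B with A; auto.
  apply functional_extensionality; intro z; apply propositional_extensionality; auto.
Qed.

Lemma open_empty (X : TopSpace) : opens X (fun _ => False).
Proof.
  apply (opens_ext _ (fun x => exists i : False, (fun (_:False) (_:X) => True) i x)).
  - intros z; split; [intros [[] _] | intros []].
  - apply open_union. intros [].
Qed.

Lemma open_Union (X : TopSpace) (A : Type) (P : A -> Prop) (G : A -> X -> Prop) :
  (forall a, P a -> opens X (G a)) -> opens X (fun z => exists a, P a /\ G a z).
Proof.
  intros h.
  apply (opens_ext _ (fun z => exists i : {a | P a}, G (proj1_sig i) z)).
  - intros z; split.
    + intros [[a ha] hz]; exists a; auto.
    + intros [a [ha hz]]; exists (exist _ a ha); auto.
  - apply open_union. intros [a ha]; apply h; auto.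
Qed.

Lemma open_local (X : TopSpace) (A : X -> Prop) :
  (forall z, A z -> exists O, opens X O /\ O z /\ forall w, O w -> A w) -> opens X A.
Proof.
  intros h.
  apply (opens_ext _ (fun z => exists O, (opens X O /\ forall w, O w -> A w) /\ O z)).
  - intros z; split.
    + intros [O [[_ hO] hz]]; auto.
    + intros hz; destruct (h z hz) as [O [hO [hOz hOA]]]; exists O; auto.
  - apply open_Union; intros O [hO _]; exact hO.
Qed.

Lemma open_finite_inter (X : TopSpace) (A : Type) (l : list A) (G : A -> X -> Prop) :
  (forall a, In a l -> opens X (G a)) -> opens X (fun z => forall a, In a l -> G a z).
Proof.
  induction l as [|a l IH]; intros h.
  - apply (opens_ext _ (fun _ => True)); [|apply open_full].
    intros z; split; auto; intros _ a [].
  - apply (opens_ext _ (fun z => G a z /\ (forall b, In b l -> G b z))).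
    + intros z; split.
      * intros [h1 h2] b [<-|hb]; auto.
      * intros H; split; [apply H; left; auto | intros b hb; apply H; right; auto].
    + apply open_inter; [apply h; left; auto | apply IH; intros b hb; apply h; right; auto].
Qed.

Definition closed (X : TopSpace) (C : X -> Prop) := opens X (fun z => ~ C z).

Lemma closed_compact (X : TopSpace) (hc : compact_space X) (C : X -> Prop) (hC : closed X C)
  (G : X -> X -> Prop) (hG : forall p, C p -> opens X (G p) /\ G p p) :
  exists l : list X, forall z, C z -> exists p, In p l /\ C p /\ G p z.
Proof.
  set (H := fun (i : option X) z => match i with None => ~ C z | Some p => C p /\ G p z end).
  destruct (hc (option X) H) as [l hl]; subst H.
  - intros [p|]; simpl; [|exact hC].
    destruct (classic (C p)) as [hp|hp].
    + apply (opens_ext _ (G p)); [intros z; tauto| apply (hG p hp)].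
    + apply (opens_ext _ (fun _ => False)); [intros z; tauto| apply open_empty].
  - intros z. destruct (classic (C z)) as [hz|hz].
    + exists (Some z); simpl; split; auto; apply (hG z hz).
    + exists None; simpl; auto.
  - exists (flat_map (fun i => match i with None => nil | Some p => p :: nil end) l).
    intros z hz. destruct (hl z) as [[p|] [hi hpi]]; simpl in hpi; [|contradiction].
    exists p; split; [|exact hpi].
    apply in_flat_map. exists (Some p); simpl; auto.
Qed.


Lemma sep_step (X : TopSpace) (hc : compact_space X) (C E : X -> Prop) (hC : closed X C)
  (hex : forall p, C p -> exists A B : X -> Prop, opens X A /\ opens X B /\ A p /\
          (forall z, E z -> B z) /\ (forall z, A z -> B z -> False)) :
  exists V W : X -> Prop, opens X V /\ opens X W /\ (forall z, C z -> V z) /\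
     (forall z, E z -> W z) /\ (forall z, V z -> W z -> False).
Proof.
  assert (hch : forall p, exists AB : (X -> Prop) * (X -> Prop), C p ->
     opens X (fst AB) /\ opens X (snd AB) /\ fst AB p /\
          (forall z, E z -> snd AB z) /\ (forall z, fst AB z -> snd AB z -> False)).
  { intros p. destruct (classic (C p)) as [hp|hp].
    - destruct (hex p hp) as [A [B hAB]]. exists (A, B); auto.
    - exists ((fun _ => False), (fun _ => False)); intros; contradiction. }
  destruct (functional_choice _ hch) as [sel hsel].
  destruct (closed_compact X hc C hC (fun p => fst (sel p))) as [l hl].
  { intros p hp. destruct (hsel p hp) as [h1 [h2 [h3 _]]]; auto. }
  exists (fun z => exists p, (In p l /\ C p) /\ fst (sel p) z).
  exists (fun z => forall p, In p l -> (C p -> snd (sel p) z)).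
  split; [|split; [|split; [|split]]].
  - apply open_Union. intros p [_ hp]. apply (hsel p hp).
  - apply open_finite_inter. intros p _. destruct (classic (C p)) as [hp|hp].
    + apply (opens_ext _ (snd (sel p))); [intros z; tauto| apply (hsel p hp)].
    + apply (opens_ext _ (fun _ => True)); [intros z; tauto| apply open_full].
  - intros z hz. destruct (hl z hz) as [p [h1 [h2 h3]]]. exists p; auto.
  - intros z hz p _ hp. apply (hsel p hp); auto.
  - intros z [p [[h1 h2] h3]] hw. destruct (hsel p h2) as [_ [_ [_ [_ hd]]]]. apply (hd z h3). apply hw; auto.
Qed.

Lemma singleton_closed (X : TopSpace) (hh : hausdorff_space X) (x : X) :
  closed X (fun z => z = x).
Proof.
  apply open_local. intros z hz.
  destruct (hh z x hz) as [U [V [hU [hV [hUz [hVx hd]]]]]].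
  exists U; split; auto; split; auto. intros w hw <-. apply (hd w); auto.
Qed.

Lemma sep_closed (X : TopSpace) (hc : compact_space X) (hh : hausdorff_space X)
  (C D : X -> Prop) (hC : closed X C) (hD : closed X D) (hdis : forall z, C z -> D z -> False) :
  exists V W : X -> Prop, opens X V /\ opens X W /\ (forall z, C z -> V z) /\
     (forall z, D z -> W z) /\ (forall z, V z -> W z -> False).
Proof.
  apply sep_step; auto. intros p hp.
  assert (hnp : ~ D p) by (intro; apply (hdis p); auto).
  destruct (sep_step X hc D (fun z => z = p) hD) as [W [V [hW [hV [hDW [hpV hd]]]]]].
  { intros q hq. assert (q <> p) by (intros ->; contradiction).
    destruct (hh q p H) as [A [B [hA [hB [hAq [hBp hAB]]]]]].
    exists A, B; repeat split; auto. intros z ->; auto.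
    intros z h1 h2; apply (hAB z); auto. }
  exists V, W; repeat split; auto. intros z h1 h2; apply (hd z); auto.
Qed.

Definition cl (X : TopSpace) (A : X -> Prop) (z : X) : Prop :=
  forall O, opens X O -> O z -> exists w, O w /\ A w.

Lemma cl_closed (X : TopSpace) (A : X -> Prop) : closed X (cl X A).
Proof.
  apply open_local. intros z hz. unfold cl in hz.
  apply not_all_ex_not in hz. destruct hz as [O hO].
  exists O. apply imply_to_and in hO; destruct hO as [hO1 hO].
  apply imply_to_and in hO; destruct hO as [hO2 hO].
  split; [exact hO1|]; split; [exact hO2|]. intros w hw hcl.
  destruct (hcl O hO1 hw) as [u [hu1 hu2]]. apply hO; exists u; auto.
Qed.

Lemma sub_cl (X : TopSpace) (A : X -> Prop) z : A z -> cl X A z.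
Proof. intros h O _ hO; exists z; auto. Qed.

Lemma shrink (X : TopSpace) (hc : compact_space X) (hh : hausdorff_space X)
  (C O : X -> Prop) (hC : closed X C) (hO : opens X O) (hCO : forall z, C z -> O z) :
  exists V, opens X V /\ (forall z, C z -> V z) /\ (forall z, cl X V z -> O z).
Proof.
  destruct (sep_closed X hc hh C (fun z => ~ O z) hC) as [V [W [hV [hW [hCV [hOW hd]]]]]].
  - apply (opens_ext _ O); auto. intros z; split; [auto | apply NNPP].
  - intros z h1 h2; apply h2; auto.
  - exists V; repeat split; auto. intros z hz. apply NNPP; intro hnz.
    destruct (hz W hW (hOW z hnz)) as [w [h1 h2]]. apply (hd w); auto.
Qed.


Lemma glb_ex (S : R -> Prop) (ne : exists r, S r) (lb : exists L, forall r, S r -> L <= r) :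
  {g | (forall r, S r -> g <= r) /\ forall b, (forall r, S r -> b <= r) -> b <= g}.
Proof.
  destruct (completeness (fun r => S (- r))) as [m [hm1 hm2]].
  - destruct lb as [L hL]. exists (- L). intros r hr. specialize (hL _ hr). lra.
  - destruct ne as [r hr]. exists (- r). rewrite Ropp_involutive; auto.
  - exists (- m). split.
    + intros r hr. assert (- r <= m) by (apply hm1; rewrite Ropp_involutive; auto). lra.
    + intros b hb. assert (m <= - b); [|lra]. apply hm2. intros r hr. specialize (hb _ hr). lra.
Qed.

Lemma lub_ex (S : R -> Prop) (ne : exists r, S r) (ub : exists L, forall r, S r -> r <= L) :
  {g | (forall r, S r -> r <= g) /\ forall b, (forall r, S r -> r <= b) -> g <= b}.
Proof.
  destruct (completeness S) as [m [hm1 hm2]].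
  - destruct ub as [L hL]. exists L. intros r hr. auto.
  - auto.
  - exists m. split; auto.
Qed.

Lemma cont_of_semi (X : TopSpace) (g : X -> R) :
  (forall a, opens X (fun z => g z < a)) -> (forall a, opens X (fun z => a < g z)) ->
  continuousR g.
Proof.
  intros h1 h2 U hU. apply open_local. intros z hz.
  destruct (hU _ hz) as [e [he hUe]].
  exists (fun w => g w < g z + e /\ g z - e < g w). split; [apply open_inter; auto|].
  split; [lra|]. intros w [hw1 hw2]. apply hUe. apply Rabs_def1; lra.
Qed.

Lemma INR_le_pow2 n : INR n + 1 <= 2 ^ n.
Proof. induction n; [simpl; lra|]. rewrite S_INR; simpl. pose proof (pos_INR n). lra. Qed.
Lemma INR_lt_pow2 n : INR n < 2 ^ n.
Proof. pose proof (INR_le_pow2 n); lra. Qed.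

Lemma dyadic_dense a b : 0 <= a -> a < b -> b <= 1 ->
  exists n k, (k <= 2 ^ n)%nat /\ a < INR k / 2 ^ n /\ INR k / 2 ^ n < b.
Proof.
  intros ha hab hb.
  destruct (archimed (1 / (b - a))) as [hz1 hz2].
  set (z := up (1 / (b - a))) in *.
  assert (hpos : 0 < 1 / (b - a)) by (apply Rdiv_lt_0_compat; lra).
  assert (hz0 : (0 <= z)%Z) by (apply le_IZR; lra).
  set (n := Z.to_nat z).
  assert (hn : IZR z = INR n) by (unfold n; rewrite INR_IZR_INZ, Znat.Z2Nat.id; auto).
  assert (h2n : 1 / (b - a) < 2 ^ n) by (pose proof (INR_lt_pow2 n); lra).
  assert (hp : 0 < 2 ^ n) by (apply pow_lt; lra).
  destruct (archimed (a * 2 ^ n)) as [hk1 hk2].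
  set (w := up (a * 2 ^ n)) in *.
  assert (hw0 : (0 <= w)%Z) by (apply le_IZR; nra).
  set (k := Z.to_nat w).
  assert (hk : IZR w = INR k) by (unfold k; rewrite INR_IZR_INZ, Znat.Z2Nat.id; auto).
  assert (hba : 1 < (b - a) * 2 ^ n).
  { unfold Rdiv in h2n. rewrite Rmult_1_l in h2n.
    apply (Rmult_lt_compat_l (b - a)) in h2n; [|lra]. rewrite Rinv_r in h2n; lra. }
  assert (hk3 : INR k < b * 2 ^ n) by lra.
  exists n, k. split; [|split].
  - apply Nat.lt_le_incl, INR_lt. rewrite pow_INR. simpl INR. replace (1+1) with 2 by ring. nra.
  - apply (Rmult_lt_reg_r (2 ^ n)); auto. unfold Rdiv. rewrite Rmult_assoc, Rinv_l; lra.
  - apply (Rmult_lt_reg_r (2 ^ n)); auto. unfold Rdiv. rewrite Rmult_assoc, Rinv_l; lra.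
Qed.


Definition shP (X : TopSpace) (A B V : X -> Prop) :=
  opens X V /\ (forall z, cl X A z -> V z) /\ (forall z, cl X V z -> B z).

Lemma ex_shrink (X : TopSpace) (A B : X -> Prop) :
  exists V, (exists W, shP X A B W) -> shP X A B V.
Proof.
  destruct (classic (exists W, shP X A B W)) as [[W hW]|h].
  - exists W; auto.
  - exists A; intros; contradiction.
Qed.

Definition shrinkf (X : TopSpace) (A B : X -> Prop) : X -> Prop :=
  proj1_sig (constructive_indefinite_description _ (ex_shrink X A B)).

Lemma shrinkf_spec (X : TopSpace) (hc : compact_space X) (hh : hausdorff_space X)
  (A B : X -> Prop) (hB : opens X B) (hAB : forall z, cl X A z -> B z) :
  shP X A B (shrinkf X A B).
Proof.
  unfold shrinkf. destruct (constructive_indefinite_description _ (ex_shrink X A B)) as [V hV].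
  simpl. apply hV.
  destruct (shrink X hc hh (cl X A) B (cl_closed X A) hB hAB) as [W hW]. exists W; exact hW.
Qed.

Definition refine (X : TopSpace) (g : nat -> X -> Prop) (j : nat) : X -> Prop :=
  if Nat.even j then g (Nat.div2 j) else shrinkf X (g (Nat.div2 j)) (g (S (Nat.div2 j))).

Fixpoint Useq (X : TopSpace) (U0 O1 : X -> Prop) (n : nat) : nat -> X -> Prop :=
  match n with
  | O => fun k => match k with O => U0 | _ => O1 end
  | S n => refine X (Useq X U0 O1 n)
  end.

Definition Inv (X : TopSpace) (g : nat -> X -> Prop) (n : nat) :=
  (forall k, (k <= 2 ^ n)%nat -> opens X (g k)) /\
  (forall k, (k < 2 ^ n)%nat -> forall z, cl X (g k) z -> g (S k) z).

Lemma d2e k : Nat.div2 (2*k) = k. Proof. rewrite Nat.div2_div, Nat.mul_comm, Nat.div_mul; lia. Qed.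
Lemma d2o k : Nat.div2 (S (2*k)) = k. Proof. rewrite Nat.div2_div. symmetry. apply (Nat.div_unique _ 2 k 1); lia. Qed.

Lemma refine_even (X : TopSpace) g k : refine X g (2 * k) = g k.
Proof.
  unfold refine. rewrite Nat.even_mul, d2e. reflexivity.
Qed.

Lemma refine_odd (X : TopSpace) g k : refine X g (S (2 * k)) = shrinkf X (g k) (g (S k)).
Proof.
  unfold refine. rewrite Nat.even_succ, Nat.odd_mul, d2o. reflexivity.
Qed.

Lemma even_or_odd (j : nat) : exists k, j = (2 * k)%nat \/ j = S (2 * k).
Proof.
  destruct (Nat.Even_or_Odd j) as [[k hk]|[k hk]]; exists k; lia.
Qed.

Lemma Inv_refine (X : TopSpace) (hc : compact_space X) (hh : hausdorff_space X) g n :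
  Inv X g n -> Inv X (refine X g) (S n).
Proof.
  unfold Inv; intros [h1 h2]. rewrite Nat.pow_succ_r'. split.
  - intros j hj. destruct (even_or_odd j) as [k [->| ->]].
    + rewrite refine_even. apply h1. lia.
    + rewrite refine_odd. apply shrinkf_spec; auto. apply h1; lia. apply h2; lia.
  - intros j hj z hz. destruct (even_or_odd j) as [k [->| ->]].
    + rewrite refine_odd. rewrite refine_even in hz.
      apply (shrinkf_spec X hc hh); auto. apply h1; lia. apply h2; lia.
    + replace (S (S (2 * k))) with (2 * S k)%nat by lia. rewrite refine_even.
      rewrite refine_odd in hz.
      apply (shrinkf_spec X hc hh (g k) (g (S k))); auto. apply h1; lia. apply h2; lia.
Qed.

Lemma Inv_all (X : TopSpace) (hc : compact_space X) (hh : hausdorff_space X) U0 O1 :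
  opens X U0 -> opens X O1 -> (forall z, cl X U0 z -> O1 z) ->
  forall n, Inv X (Useq X U0 O1 n) n.
Proof.
  intros hU hO hUO n. induction n.
  - split; simpl.
    + intros [|[|k]] hk; auto; lia.
    + intros [|k] hk; [|lia]. auto.
  - simpl. apply Inv_refine; auto.
Qed.

Lemma Useq_cons (X : TopSpace) U0 O1 n m k :
  Useq X U0 O1 (n + m) (k * 2 ^ m) = Useq X U0 O1 n k.
Proof.
  induction m.
  - rewrite Nat.add_0_r, Nat.pow_0_r, Nat.mul_1_r. auto.
  - rewrite Nat.add_succ_r. change (Useq X U0 O1 (S (n+m))) with (refine X (Useq X U0 O1 (n+m))).
    replace (k * 2 ^ S m)%nat with (2 * (k * 2 ^ m))%nat
      by (rewrite Nat.pow_succ_r'; lia).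
    rewrite refine_even. auto.
Qed.

Lemma Inv_mono (X : TopSpace) g n : Inv X g n ->
  forall a b, (a < b)%nat -> (b <= 2 ^ n)%nat -> forall z, cl X (g a) z -> g b z.
Proof.
  intros [h1 h2] a b hab. induction hab as [|b hab IH]; intros hb z hz.
  - apply h2; auto; lia.
  - apply h2; [lia|]. apply sub_cl. apply IH; auto; lia.
Qed.


Lemma INR_pow2 n : INR (2 ^ n) = 2 ^ n.
Proof. rewrite pow_INR. replace (INR 2) with 2 by (simpl; lra). auto. Qed.

Lemma dy_lt n k m j : INR k / 2 ^ n < INR j / 2 ^ m -> (k * 2 ^ m < j * 2 ^ n)%nat.
Proof.
  intros h. apply INR_lt. rewrite !mult_INR, !INR_pow2.
  assert (0 < 2 ^ n) by (apply pow_lt; lra). assert (0 < 2 ^ m) by (apply pow_lt; lra).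
  unfold Rdiv in h.
  apply (Rmult_lt_compat_r (2 ^ n * 2 ^ m)) in h; [|nra].
  replace (INR k * / 2 ^ n * (2 ^ n * 2 ^ m)) with (INR k * 2 ^ m) in h
    by (field; lra).
  replace (INR j * / 2 ^ m * (2 ^ n * 2 ^ m)) with (INR j * 2 ^ n) in h
    by (field; lra).
  exact h.
Qed.

Lemma Useq_cmp (X : TopSpace) (hc : compact_space X) (hh : hausdorff_space X) U0 O1 :
  opens X U0 -> opens X O1 -> (forall z, cl X U0 z -> O1 z) ->
  forall n k m j, (k <= 2 ^ n)%nat -> (j <= 2 ^ m)%nat -> INR k / 2 ^ n < INR j / 2 ^ m ->
  forall z, cl X (Useq X U0 O1 n k) z -> Useq X U0 O1 m j z.
Proof.
  intros hU hO hUO n k m j hk hj hlt z hz.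
  pose proof (dy_lt _ _ _ _ hlt) as hl.
  rewrite <- (Useq_cons X U0 O1 n m) in hz.
  rewrite <- (Useq_cons X U0 O1 m n). rewrite (Nat.add_comm m n).
  apply (Inv_mono X _ (n + m) (Inv_all X hc hh U0 O1 hU hO hUO (n + m)) (k * 2 ^ m)); auto.
  rewrite Nat.pow_add_r. rewrite Nat.mul_comm. apply Nat.mul_le_mono_l. auto.
Qed.

Definition Sz (X : TopSpace) (U : nat -> nat -> X -> Prop) (z : X) (r : R) : Prop :=
  r = 1 \/ exists n k, (k <= 2 ^ n)%nat /\ r = INR k / 2 ^ n /\ U n k z.

Lemma Sz_ne X U z : exists r, Sz X U z r.
Proof. exists 1; left; auto. Qed.

Lemma dy_nonneg n k : 0 <= INR k / 2 ^ n.
Proof. unfold Rdiv. apply Rmult_le_pos; [apply pos_INR| apply Rlt_le, Rinv_0_lt_compat, pow_lt; lra]. Qed.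

Lemma Sz_lb X U z : exists L, forall r, Sz X U z r -> L <= r.
Proof. exists 0. intros r [->|[n [k [_ [-> _]]]]]; [lra| apply dy_nonneg]. Qed.

Definition uf (X : TopSpace) (U : nat -> nat -> X -> Prop) (z : X) : R :=
  proj1_sig (glb_ex (Sz X U z) (Sz_ne X U z) (Sz_lb X U z)).

Lemma uf_spec X U z : (forall r, Sz X U z r -> uf X U z <= r) /\
   forall b, (forall r, Sz X U z r -> b <= r) -> b <= uf X U z.
Proof. unfold uf. destruct (glb_ex _ _ _) as [g hg]. exact hg. Qed.

Lemma uf_le1 X U z : uf X U z <= 1.
Proof. apply (proj1 (uf_spec X U z)); left; auto. Qed.

Lemma uf_ge0 X U z : 0 <= uf X U z.
Proof. apply (proj2 (uf_spec X U z)). intros r [->|[n [k [_ [-> _]]]]]; [lra| apply dy_nonneg]. Qed.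

Lemma uf_cont (X : TopSpace) (U : nat -> nat -> X -> Prop)
  (hop : forall n k, (k <= 2 ^ n)%nat -> opens X (U n k))
  (hcmp : forall n k m j, (k <= 2 ^ n)%nat -> (j <= 2 ^ m)%nat -> INR k / 2 ^ n < INR j / 2 ^ m ->
     forall z, cl X (U n k) z -> U m j z) :
  continuousR (uf X U).
Proof.
  apply cont_of_semi.
  - intros a. apply open_local. intros z hz.
    destruct (classic (exists r, Sz X U z r /\ r < a)) as [[r [hr hra]]|hn].
    + destruct hr as [->|[n [k [hk [-> hU]]]]].
      * exists (fun _ => True). split; [apply open_full|]. split; auto.
        intros w _. pose proof (uf_le1 X U w). lra.
      * exists (U n k). split; [auto|]. split; auto. intros w hw.
        assert (uf X U w <= INR k / 2 ^ n); [|lra].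
        apply (proj1 (uf_spec X U w)). right. exists n, k; auto.
    + exfalso. assert (a <= uf X U z); [|lra].
      apply (proj2 (uf_spec X U z)). intros r hr. apply Rnot_lt_le. intro; apply hn; eauto.
  - intros a. apply open_local. intros z hz.
    destruct (Rlt_dec a 0) as [ha|ha].
    + exists (fun _ => True). split; [apply open_full|]. split; auto.
      intros w _. pose proof (uf_ge0 X U w). lra.
    + pose proof (uf_le1 X U z).
      destruct (dyadic_dense a (uf X U z)) as [n1 [k1 [hk1 [h11 h12]]]]; auto; try lra.
      pose proof (dy_nonneg n1 k1).
      destruct (dyadic_dense (INR k1 / 2 ^ n1) (uf X U z)) as [n2 [k2 [hk2 [h21 h22]]]];
        auto; try lra.
      exists (fun w => ~ cl X (U n1 k1) w). split; [apply cl_closed|]. split.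
      * intros hcl. pose proof (hcmp _ _ _ _ hk1 hk2 h21 z hcl) as hU2.
        assert (uf X U z <= INR k2 / 2 ^ n2); [|lra].
        apply (proj1 (uf_spec X U z)). right. exists n2, k2; auto.
      * intros w hw. assert (INR k1 / 2 ^ n1 <= uf X U w); [|lra].
        apply (proj2 (uf_spec X U w)). intros r [->|[n [k [hk [-> hU]]]]]; [lra|].
        apply Rnot_lt_le. intros hlt. apply hw. apply sub_cl.
        apply (hcmp _ _ _ _ hk hk1 hlt). apply sub_cl; auto.
Qed.


Lemma urysohn (X : TopSpace) (hc : compact_space X) (hh : hausdorff_space X)
  (F : X -> Prop) (hF : closed X F) (x : X) (hx : ~ F x) :
  exists phi : C X, ev phi x = 0 /\ (forall z, F z -> ev phi z = 1) /\
    (forall z, 0 <= ev phi z <= 1).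
Proof.
  destruct (shrink X hc hh (fun z => z = x) (fun z => ~ F z) (singleton_closed X hh x) hF)
    as [U0 [hU0 [hxU0 hcl]]].
  { intros z ->; auto. }
  set (U := Useq X U0 (fun z => ~ F z)).
  assert (hInv := Inv_all X hc hh U0 (fun z => ~ F z) hU0 hF hcl).
  assert (hop : forall n k, (k <= 2 ^ n)%nat -> opens X (U n k)).
  { intros n k hk. apply (proj1 (hInv n)); auto. }
  assert (hcmp := Useq_cmp X hc hh U0 (fun z => ~ F z) hU0 hF hcl).
  exists (exist _ (uf X U) (uf_cont X U hop hcmp)). unfold ev; simpl. split; [|split].
  - apply Rle_antisym; [|apply uf_ge0].
    apply (proj1 (uf_spec X U x)). right. exists O, O. split; [simpl; lia|].
    split; [simpl; lra|]. simpl. apply hxU0; auto.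
  - intros z hz. apply Rle_antisym; [apply uf_le1|].
    apply (proj2 (uf_spec X U z)). intros r [->|[n [k [hk [-> hU]]]]]; [lra|].
    exfalso.
    assert (hN : U n (2 ^ n)%nat z).
    { destruct (Compare_dec.le_lt_eq_dec _ _ hk) as [hlt|heq].
      - apply (Inv_mono X _ n (hInv n) k); auto. apply sub_cl; auto.
      - rewrite <- heq; auto. }
    unfold U in hN. rewrite <- (Nat.mul_1_l (2 ^ n)) in hN.
    change n with (0 + n)%nat in hN at 1. rewrite Useq_cons in hN. simpl in hN. auto.
  - intros z; split; [apply uf_ge0|apply uf_le1].
Qed.


Lemma aff_cont (X : TopSpace) (phi : C X) (a b : R) :
  continuousR (fun z => a + b * ev phi z).
Proof.
  intros U hU. apply (proj2_sig phi (fun r => U (a + b * r))).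
  intros r hr. destruct (hU _ hr) as [e [he h]].
  exists (e / (Rabs b + 1)). split.
  - apply Rdiv_lt_0_compat; [lra| pose proof (Rabs_pos b); lra].
  - intros s hs. apply h.
    replace (a + b * s - (a + b * r)) with (b * (s - r)) by ring.
    rewrite Rabs_mult. pose proof (Rabs_pos b). pose proof (Rabs_pos (s - r)).
    assert (Rabs (s - r) * (Rabs b + 1) < e).
    { apply (Rmult_lt_compat_r (Rabs b + 1)) in hs; [|lra].
      unfold Rdiv in hs. rewrite Rmult_assoc, Rinv_l in hs; lra. }
    nra.
Qed.

Definition aff (X : TopSpace) (a b : R) (phi : C X) : C X :=
  exist _ (fun z => a + b * ev phi z) (aff_cont X phi a b).

Lemma ev_aff X a b phi z : ev (aff X a b phi) z = a + b * ev phi z.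
Proof. reflexivity. Qed.

Lemma open_lt (X : TopSpace) (phi : C X) a : opens X (fun z => ev phi z < a).
Proof.
  apply (proj2_sig phi (fun r => r < a)). intros r hr. exists (a - r). split; [lra|].
  intros s hs. apply Rabs_def2 in hs. lra.
Qed.

Lemma open_gt (X : TopSpace) (phi : C X) a : opens X (fun z => a < ev phi z).
Proof.
  apply (proj2_sig phi (fun r => a < r)). intros r hr. exists (r - a). split; [lra|].
  intros s hs. apply Rabs_def2 in hs. lra.
Qed.

Lemma bounded (X : TopSpace) (hc : compact_space X) (phi : C X) :
  exists M, forall z, Rabs (ev phi z) <= M.
Proof.
  destruct (hc nat (fun n z => Rabs (ev phi z) < INR n)) as [l hl].
  - intros n. apply (proj2_sig phi (fun r => Rabs r < INR n)).
    intros r hr. exists (INR n - Rabs r). split; [lra|].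
    intros s hs. pose proof (Rabs_triang_inv s r). pose proof (Rabs_triang_inv r s).
    rewrite Rabs_minus_sym in hs. 
    assert (Rabs (r - s) = Rabs (s - r)) by apply Rabs_minus_sym. lra.
  - intros z. destruct (archimed (Rabs (ev phi z))) as [h1 _].
    assert (hz0 : (0 <= up (Rabs (ev phi z)))%Z) by (apply le_IZR; pose proof (Rabs_pos (ev phi z)); lra).
    exists (Z.to_nat (up (Rabs (ev phi z)))).
    rewrite INR_IZR_INZ, Znat.Z2Nat.id; auto.
  - exists (fold_right (fun n s => INR n + s) 0 l). intros z.
    destruct (hl z) as [n [hn hz]]. apply Rlt_le. eapply Rlt_le_trans; [exact hz|].
    clear hl hz. induction l as [|m l IH]; [destruct hn|].
    simpl. assert (0 <= fold_right (fun n s => INR n + s) 0 l).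
    { clear. induction l; simpl; [lra|]. pose proof (pos_INR a); lra. }
    destruct hn as [<-|hn]; [lra|]. pose proof (pos_INR m). specialize (IH hn). lra.
Qed.

Lemma closed_image (X Y : TopSpace) (hc : compact_space X) (hYh : hausdorff_space Y)
  (f : X -> Y) (hf : continuous f) (K : X -> Prop) (hK : closed X K) :
  closed Y (image f K).
Proof.
  apply open_local. intros y hy.
  assert (hch : forall p, exists AB : (Y -> Prop) * (Y -> Prop), K p ->
     opens Y (fst AB) /\ opens Y (snd AB) /\ fst AB (f p) /\ snd AB y /\
     (forall w, fst AB w -> snd AB w -> False)).
  { intros p. destruct (classic (K p)) as [hp|hp].
    - assert (f p <> y) by (intro; apply hy; exists p; auto).
      destruct (hYh _ _ H) as [A [B hAB]]. exists (A, B). simpl. intros _. firstorder.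
    - exists ((fun _ => False), (fun _ => False)); intros; contradiction. }
  destruct (functional_choice _ hch) as [sel hsel].
  destruct (closed_compact X hc K hK (fun p z => fst (sel p) (f z))) as [l hl].
  { intros p hp. destruct (hsel p hp) as [h1 [h2 [h3 _]]]. split; [apply hf|]; auto. }
  exists (fun w => forall p, In p l -> (K p -> snd (sel p) w)). split; [|split].
  - apply open_finite_inter. intros p _. destruct (classic (K p)) as [hp|hp].
    + apply (opens_ext _ (snd (sel p))); [intros z; tauto| apply (hsel p hp)].
    + apply (opens_ext _ (fun _ => True)); [intros z; tauto| apply open_full].
  - intros p _ hp. apply (hsel p hp).
  - intros w hw [z [hz <-]]. destruct (hl z hz) as [p [h1 [h2 h3]]].
    destruct (hsel p h2) as [_ [_ [_ [_ hd]]]]. apply (hd (f z)); auto.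
Qed.


Lemma OH_eq (X : TopSpace) (a b : OH X) : (forall phi, proj1_sig a phi = proj1_sig b phi) -> a = b.
Proof.
  intros h. destruct a as [a ha], b as [b hb]. simpl in h.
  assert (a = b) by (apply functional_extensionality; auto). subst b.
  f_equal. apply proof_irrelevance.
Qed.

Lemma delta_isOH (X : TopSpace) (x : X) : isOH (fun phi : C X => ev phi x).
Proof.
  repeat split.
  - intros m hm; apply hm.
  - intros M hM; apply hM.
  - intros one h; apply h.
  - intros phi psi c h; apply h.
  - intros phi psi h; apply h.
  - intros phi psi t _ h; apply h.
Qed.

Definition delta (X : TopSpace) (x : X) : OH X := exist _ _ (delta_isOH X x).

Lemma dir1 (X Y : TopSpace)
  (hXc : compact_space X) (hXh : hausdorff_space X) (hYc : compact_space Y) (hYh : hausdorff_space Y)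
  (f : X -> Y) (hf : continuous f) :
  OH_open_map (OHmap hf) -> open_map f.
Proof.
  intros hO U hU. apply open_local. intros y [x [hxU <-]].
  destruct (urysohn X hXc hXh (fun z => ~ U z)) with (x := x) as [psi0 [h0x [h0F h0b]]].
  { apply (opens_ext _ U); auto. intros z; split; [auto| apply NNPP]. }
  { auto. }
  set (phi0 := aff X 1 (-1) psi0).
  assert (hp0x : ev phi0 x = 1) by (unfold phi0; rewrite ev_aff, h0x; ring).
  assert (hp0U : forall z, ~ U z -> ev phi0 z = 0)
    by (intros z hz; unfold phi0; rewrite ev_aff, h0F; auto; ring).
  assert (hp0b : forall z, ev phi0 z <= 1)
    by (intros z; unfold phi0; rewrite ev_aff; specialize (h0b z); lra).
  set (O := fun nu : OH X => 1/2 < proj1_sig nu phi0).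
  assert (hOo : OH_open O).
  { intros nu hnu. exists (phi0 :: nil), (proj1_sig nu phi0 - 1/2). split.
    - unfold O in hnu; lra.
    - intros mu hmu. specialize (hmu phi0 (or_introl eq_refl)). apply Rabs_def2 in hmu.
      unfold O in *; lra. }
  destruct (hO O hOo (delta Y (f x))) as [l [e [he hN]]].
  { exists (delta X x). split.
    - unfold O. change (1/2 < ev phi0 x). rewrite hp0x; lra.
    - apply OH_eq. intros psi. reflexivity. }
  exists (fun y' => forall psi, In psi l -> Rabs (ev psi y' - ev psi (f x)) < e).
  split; [|split].
  - apply open_finite_inter. intros psi _.
    apply (proj2_sig psi (fun r => Rabs (r - ev psi (f x)) < e)).
    intros r hr. exists (e - Rabs (r - ev psi (f x))). split; [lra|].
    intros s hs. pose proof (Rabs_triang (s - r) (r - ev psi (f x))).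
    replace (s - r + (r - ev psi (f x))) with (s - ev psi (f x)) in H by ring. lra.
  - intros psi _. replace (ev psi (f x) - ev psi (f x)) with 0 by ring. rewrite Rabs_R0; auto.
  - intros y' hy'.
    destruct (hN (delta Y y')) as [nu [hnuO hnu]].
    { intros psi hpsi. apply hy'; auto. }
    set (K := fun z => 1/4 <= ev phi0 z).
    destruct (classic (image f K y')) as [[z [hz <-]]|hnK].
    + exists z. split; auto. apply NNPP; intro hnz. unfold K in hz. rewrite hp0U in hz; auto; lra.
    + assert (hKc : closed X K).
      { apply (opens_ext _ (fun z => ev phi0 z < 1/4)); [|apply open_lt].
        intros z; unfold K; split; intros; lra. }
      destruct (urysohn Y hYc hYh (image f K) (closed_image X Y hXc hYh f hf K hKc) y' hnK)
        as [psi [hpy [hpK hpb]]].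
      exfalso.
      set (chi := compC hf psi).
      set (chi3 := aff X 0 (3/4) chi).
      set (g := aff X (1/4) 1 chi3).
      destruct (proj2_sig nu) as [hV [hn [hw [ho hh]]]].
      assert (h1 : proj1_sig nu phi0 <= proj1_sig nu g).
      { apply ho. intros z. unfold g, chi3; rewrite !ev_aff. change (ev chi z) with (ev psi (f z)).
        destruct (classic (K z)) as [hz|hz].
        - pose proof (hpK (f z) (ex_intro _ z (conj hz eq_refl))). specialize (hp0b z). lra.
        - unfold K in hz. specialize (hpb (f z)). lra. }
      assert (h2 : proj1_sig nu g = proj1_sig nu chi3 + 1/4).
      { apply hw. intros z; unfold g; rewrite ev_aff; ring. }
      assert (h3 : proj1_sig nu chi3 = 3/4 * proj1_sig nu chi).
      { apply hh; [lra|]. intros z; unfold chi3; rewrite ev_aff; ring. }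
      assert (h4 : proj1_sig nu chi = 0).
      { rewrite <- hpy. change (proj1_sig (OHmap hf nu) psi = proj1_sig (delta Y y') psi).
        rewrite hnu; auto. }
      unfold O in hnuO. lra.
Qed.


Definition Fib {X Y : TopSpace} (f : X -> Y) (phi : C X) (y : Y) (r : R) :=
  exists x, f x = y /\ r = ev phi x.

Lemma Fib_ne {X Y : TopSpace} (f : X -> Y) (hsurj : forall y : Y, exists x : X, f x = y) phi y :
  exists r, Fib f phi y r.
Proof. destruct (hsurj y) as [x hx]. exists (ev phi x), x; auto. Qed.

Lemma Fib_ub {X Y : TopSpace} (hXc : compact_space X) (f : X -> Y) phi y :
  exists L, forall r, Fib f phi y r -> r <= L.
Proof.
  destruct (bounded X hXc phi) as [M hM]. exists M. intros r [x [_ ->]].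
  specialize (hM x). pose proof (Rle_abs (ev phi x)); lra.
Qed.

Definition upf {X Y : TopSpace} (hXc : compact_space X) (f : X -> Y)
  (hsurj : forall y : Y, exists x : X, f x = y) (phi : C X) (y : Y) : R :=
  proj1_sig (lub_ex _ (Fib_ne f hsurj phi y) (Fib_ub hXc f phi y)).


Lemma upf_spec1 {X Y : TopSpace} hXc (f : X -> Y) hsurj phi x :
  ev phi x <= upf hXc f hsurj phi (f x).
Proof.
  unfold upf. destruct (lub_ex _ _ _) as [g [h1 h2]]. simpl. apply h1. exists x; auto.
Qed.

Lemma upf_spec2 {X Y : TopSpace} hXc (f : X -> Y) hsurj phi y b :
  (forall x, f x = y -> ev phi x <= b) -> upf hXc f hsurj phi y <= b.
Proof.
  intros h. unfold upf. destruct (lub_ex _ _ _) as [g [h1 h2]]. simpl. apply h2.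
  intros r [x [hx ->]]; auto.
Qed.

Lemma upf_shift {X Y : TopSpace} hXc (f : X -> Y) hsurj phi psi c :
  (forall x, ev psi x = ev phi x + c) ->
  forall y, upf hXc f hsurj psi y = upf hXc f hsurj phi y + c.
Proof.
  intros h y. apply Rle_antisym.
  - apply upf_spec2. intros x <-. rewrite h. pose proof (upf_spec1 hXc f hsurj phi x). lra.
  - assert (upf hXc f hsurj phi y <= upf hXc f hsurj psi y - c); [|lra].
    apply upf_spec2. intros x <-. pose proof (upf_spec1 hXc f hsurj psi x). rewrite h in H. lra.
Qed.

Lemma upf_scale {X Y : TopSpace} hXc (f : X -> Y) hsurj phi psi t : 0 <= t ->
  (forall x, ev psi x = t * ev phi x) ->
  forall y, upf hXc f hsurj psi y = t * upf hXc f hsurj phi y.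
Proof.
  intros ht h y. destruct (Req_dec t 0) as [->|ht0].
  - rewrite Rmult_0_l. apply Rle_antisym.
    + apply upf_spec2. intros x _. rewrite h; lra.
    + destruct (hsurj y) as [x <-]. pose proof (upf_spec1 hXc f hsurj psi x). rewrite h in H. lra.
  - apply Rle_antisym.
    + apply upf_spec2. intros x <-. rewrite h. pose proof (upf_spec1 hXc f hsurj phi x).
      apply Rmult_le_compat_l; lra.
    + assert (upf hXc f hsurj phi y <= / t * upf hXc f hsurj psi y).
      { apply upf_spec2. intros x <-. pose proof (upf_spec1 hXc f hsurj psi x). rewrite h in H.
        replace (ev phi x) with (/ t * (t * ev phi x)) by (field; auto).
        apply Rmult_le_compat_l; [apply Rlt_le, Rinv_0_lt_compat; lra| auto]. }
      apply (Rmult_le_compat_l t) in H; [|lra].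
      rewrite <- Rmult_assoc, Rinv_r, Rmult_1_l in H; auto.
Qed.

Lemma upf_mono {X Y : TopSpace} hXc (f : X -> Y) hsurj phi psi :
  (forall x, ev phi x <= ev psi x) ->
  forall y, upf hXc f hsurj phi y <= upf hXc f hsurj psi y.
Proof.
  intros h y. apply upf_spec2. intros x <-. pose proof (upf_spec1 hXc f hsurj psi x).
  specialize (h x). lra.
Qed.

Lemma upf_comp {X Y : TopSpace} hXc (f : X -> Y) (hf : continuous f) hsurj (psi : C Y) y :
  upf hXc f hsurj (compC hf psi) y = ev psi y.
Proof.
  apply Rle_antisym.
  - apply upf_spec2. intros x <-. apply Rle_refl.
  - destruct (hsurj y) as [x <-]. apply (upf_spec1 hXc f hsurj (compC hf psi) x).
Qed.

Lemma upf_cont {X Y : TopSpace} (hXc : compact_space X) (hYh : hausdorff_space Y)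
  (f : X -> Y) (hf : continuous f) (hopen : open_map f) hsurj (phi : C X) :
  continuousR (upf hXc f hsurj phi).
Proof.
  apply cont_of_semi.
  - intros a. apply open_local. intros y0 hy0.
    set (b := (upf hXc f hsurj phi y0 + a) / 2).
    set (K := fun x => b <= ev phi x).
    assert (hK : closed X K).
    { apply (opens_ext _ (fun x => ev phi x < b)); [|apply open_lt].
      intros z; unfold K; split; intros; lra. }
    exists (fun w => ~ image f K w). split; [apply (closed_image X Y hXc hYh f hf K hK)|].
    split.
    + intros [x [hx hfx]]. unfold K in hx. pose proof (upf_spec1 hXc f hsurj phi x).
      rewrite hfx in H. unfold b in hx. lra.
    + intros w hw. assert (upf hXc f hsurj phi w <= b); [|unfold b in *; lra].
      apply upf_spec2. intros x hx. apply Rnot_lt_le. intros hlt. apply hw.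
      exists x; split; auto. unfold K; lra.
  - intros a. apply (opens_ext _ (image f (fun x => a < ev phi x))).
    + intros y; split.
      * intros [x [hx <-]]. pose proof (upf_spec1 hXc f hsurj phi x). lra.
      * intros hy. apply NNPP. intros hn.
        assert (upf hXc f hsurj phi y <= a); [|lra].
        apply upf_spec2. intros x hx. apply Rnot_lt_le. intros hlt. apply hn. exists x; auto.
    + apply hopen. apply open_gt.
Qed.


Definition clamp (l a u : R) := Rmax l (Rmin a u).

Lemma clamp_shift l a u c : clamp (l + c) (a + c) (u + c) = clamp l a u + c.
Proof. unfold clamp, Rmax, Rmin. repeat destruct Rle_dec; lra. Qed.

Lemma clamp_scale l a u t : 0 <= t -> clamp (t * l) (t * a) (t * u) = t * clamp l a u.
Proof.
  intros ht. unfold clamp, Rmax, Rmin.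
  destruct (Req_dec t 0) as [->|ht0]; [repeat destruct Rle_dec; lra|].
  assert (0 < t) by lra.
  repeat destruct Rle_dec; try lra; try nra.
Qed.

Lemma clamp_mono l a u l' a' u' : l <= l' -> a <= a' -> u <= u' -> clamp l a u <= clamp l' a' u'.
Proof. intros. unfold clamp, Rmax, Rmin. repeat destruct Rle_dec; lra. Qed.

Lemma clamp_same a m : clamp m a m = m.
Proof. unfold clamp, Rmax, Rmin. repeat destruct Rle_dec; lra. Qed.

Lemma clamp_close l a u e : 0 < e -> a - e < u -> l < a + e -> Rabs (clamp l a u - a) < e.
Proof. intros. unfold clamp, Rmax, Rmin. repeat destruct Rle_dec; apply Rabs_def1; lra. Qed.

Lemma clamp_ge l a u m : m <= l -> m <= clamp l a u.
Proof. intros. unfold clamp, Rmax, Rmin. repeat destruct Rle_dec; lra. Qed.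

Lemma clamp_le l a u M : l <= M -> u <= M -> clamp l a u <= M.
Proof. intros. unfold clamp, Rmax, Rmin. repeat destruct Rle_dec; lra. Qed.

Definition up {X Y : TopSpace} (hXc : compact_space X) (hYh : hausdorff_space Y)
  (f : X -> Y) (hf : continuous f) (hopen : open_map f) hsurj (phi : C X) : C Y :=
  exist _ (upf hXc f hsurj phi) (upf_cont hXc hYh f hf hopen hsurj phi).

Lemma dir2 (X Y : TopSpace)
  (hXc : compact_space X) (hYh : hausdorff_space Y)
  (f : X -> Y) (hf : continuous f) (hsurj : forall y : Y, exists x : X, f x = y) :
  open_map f -> OH_open_map (OHmap hf).
Proof.
  intros hopen.
  set (UP := up hXc hYh f hf hopen hsurj).
  set (DN := fun phi => aff Y 0 (-1) (UP (aff X 0 (-1) phi))).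
  assert (Fu1 : forall phi x, ev phi x <= ev (UP phi) (f x)) by (intros; apply upf_spec1).
  assert (Fu2 : forall phi y b, (forall x, f x = y -> ev phi x <= b) -> ev (UP phi) y <= b)
    by (intros; apply upf_spec2; auto).
  assert (Fd1 : forall phi x, ev (DN phi) (f x) <= ev phi x).
  { intros phi x. unfold DN. rewrite ev_aff. pose proof (Fu1 (aff X 0 (-1) phi) x).
    rewrite ev_aff in H. lra. }
  assert (Fd2 : forall phi y b, (forall x, f x = y -> b <= ev phi x) -> b <= ev (DN phi) y).
  { intros phi y b h. unfold DN. rewrite ev_aff.
    assert (ev (UP (aff X 0 (-1) phi)) y <= - b); [|lra].
    apply Fu2. intros x hx. rewrite ev_aff. specialize (h x hx). lra. }
  assert (Fu_shift : forall phi psi c, (forall x, ev psi x = ev phi x + c) ->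
            forall y, ev (UP psi) y = ev (UP phi) y + c) by (intros; apply upf_shift; auto).
  assert (Fd_shift : forall phi psi c, (forall x, ev psi x = ev phi x + c) ->
            forall y, ev (DN psi) y = ev (DN phi) y + c).
  { intros phi psi c h y. unfold DN. rewrite !ev_aff.
    rewrite (Fu_shift (aff X 0 (-1) phi) (aff X 0 (-1) psi) (- c)); [ring|].
    intros x; rewrite !ev_aff, h; ring. }
  assert (Fu_scale : forall phi psi t, 0 <= t -> (forall x, ev psi x = t * ev phi x) ->
            forall y, ev (UP psi) y = t * ev (UP phi) y) by (intros; apply upf_scale; auto).
  assert (Fd_scale : forall phi psi t, 0 <= t -> (forall x, ev psi x = t * ev phi x) ->
            forall y, ev (DN psi) y = t * ev (DN phi) y).
  { intros phi psi t ht h y. unfold DN. rewrite !ev_aff.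
    rewrite (Fu_scale (aff X 0 (-1) phi) (aff X 0 (-1) psi) t); auto; [ring|].
    intros x; rewrite !ev_aff, h; ring. }
  assert (Fu_mono : forall phi psi, (forall x, ev phi x <= ev psi x) ->
            forall y, ev (UP phi) y <= ev (UP psi) y) by (intros; apply upf_mono; auto).
  assert (Fd_mono : forall phi psi, (forall x, ev phi x <= ev psi x) ->
            forall y, ev (DN phi) y <= ev (DN psi) y).
  { intros phi psi h y. unfold DN. rewrite !ev_aff.
    assert (ev (UP (aff X 0 (-1) psi)) y <= ev (UP (aff X 0 (-1) phi)) y); [|lra].
    apply Fu_mono. intros x; rewrite !ev_aff. specialize (h x). lra. }
  assert (Fu_comp : forall psi y, ev (UP (compC hf psi)) y = ev psi y)
    by (intros; apply upf_comp).
  assert (Fd_comp : forall psi y, ev (DN (compC hf psi)) y = ev psi y).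
  { intros psi y. apply Rle_antisym.
    - destruct (hsurj y) as [x <-]. apply (Fd1 (compC hf psi) x).
    - apply Fd2. intros x <-. apply Rle_refl. }
  assert (Fdu : forall phi y, ev (DN phi) y <= ev (UP phi) y).
  { intros phi y. destruct (hsurj y) as [x <-]. pose proof (Fd1 phi x). pose proof (Fu1 phi x). lra. }
  intros U hU mu0 [nu [hnuU <-]].
  destruct (hU nu hnuU) as [l [e [he hN]]].
  exists (flat_map (fun phi => UP phi :: DN phi :: nil) l), e. split; auto.
  intros mu hmu.
  destruct (proj2_sig nu) as [nV [nn [nw [no nh]]]].
  destruct (proj2_sig mu) as [mV [mn [mw [mo mh]]]].
  set (L := fun phi => clamp (proj1_sig mu (DN phi)) (proj1_sig nu phi) (proj1_sig mu (UP phi))).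
  assert (hL : isOH L).
  { repeat split.
    - intros m hm. apply clamp_ge. apply (proj1 (mV _)). intros y. apply Fd2. intros x _; auto.
    - intros M hM. apply clamp_le.
      + apply (proj2 (mV _)). intros y. destruct (hsurj y) as [x <-].
        pose proof (Fd1 phi x). specialize (hM x). lra.
      + apply (proj2 (mV _)). intros y. apply Fu2. intros x _; auto.
    - intros one h1. unfold L. rewrite (nn one h1), (mn (UP one)), (mn (DN one)).
      + apply clamp_same.
      + intros y. apply Rle_antisym.
        * destruct (hsurj y) as [x <-]. rewrite <- (h1 x). apply Fd1.
        * apply Fd2. intros x _. rewrite h1; lra.
      + intros y. apply Rle_antisym.
        * apply Fu2. intros x _. rewrite h1; lra.
        * destruct (hsurj y) as [x <-]. rewrite <- (h1 x). apply Fu1.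
    - intros phi psi c h. unfold L.
      rewrite (nw phi psi c h), (mw (UP phi) (UP psi) c), (mw (DN phi) (DN psi) c).
      + apply clamp_shift.
      + apply Fd_shift; auto.
      + apply Fu_shift; auto.
    - intros phi psi h. unfold L. apply clamp_mono.
      + apply mo. apply Fd_mono; auto.
      + apply no; auto.
      + apply mo. apply Fu_mono; auto.
    - intros phi psi t ht h. unfold L.
      rewrite (nh phi psi t ht h), (mh (UP phi) (UP psi) t ht), (mh (DN phi) (DN psi) t ht).
      + apply clamp_scale; auto.
      + apply Fd_scale; auto.
      + apply Fu_scale; auto. }
  exists (exist _ L hL). split.
  - apply hN. intros phi hphi. simpl. unfold L.
    assert (hu := hmu (UP phi) ltac:(apply in_flat_map; exists phi; simpl; auto)).
    assert (hd := hmu (DN phi) ltac:(apply in_flat_map; exists phi; simpl; auto)).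
    simpl in hu, hd. unfold OHf_fun in hu, hd.
    assert (h1 : proj1_sig nu phi <= proj1_sig nu (compC hf (UP phi))) by (apply no; intros x; apply Fu1).
    assert (h2 : proj1_sig nu (compC hf (DN phi)) <= proj1_sig nu phi) by (apply no; intros x; apply Fd1).
    apply Rabs_def2 in hu. apply Rabs_def2 in hd.
    apply clamp_close; lra.
  - apply OH_eq. intros psi. simpl. unfold OHf_fun, L. simpl.
    rewrite (mw psi (UP (compC hf psi)) 0), (mw psi (DN (compC hf psi)) 0).
    + rewrite Rplus_0_r. apply clamp_same.
    + intros y. rewrite Fd_comp; ring.
    + intros y. rewrite Fu_comp; ring.
Qed.


Theorem proposition1 (X Y : TopSpace)
  (hXc : compact_space X) (hXh : hausdorff_space X) (hYc : compact_space Y) (hYh : hausdorff_space Y)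
  (f : X -> Y) (hf : continuous f) (hsurj : forall y : Y, exists x : X, f x = y) :
  OH_open_map (OHmap hf) <-> open_map f.
Proof.
  split.
  - apply dir1; auto.
  - apply dir2; auto.
Qed.
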